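(* Reduction Rule 2 is safe: if \((G',k')\) is obtained from an instance \((G,k)\) of Vertex Cover by applying Reduction Rule 2, then \(k'+MM(G')-2LP(G')\leq k+MM(G)-2LP(G)\).
   Context: All graphs are finite, undirected and simple. An instance of Vertex Cover is a pair \((G,k)\), \(k\in\mathbb{N}\). \(MM(G)\) is the size of a maximum matching. \(LPVC(G)\) is the LP: minimize \(\sum_v x_v\) subject to \(x_u+x_v\ge1\) for each edge \(\{u,v\}\) and \(0\le x_v\le1\); \(LP(G)\) is its optimum value. For \(X\subseteq V(G)\), \(N(X)\) is the set of vertices outside \(X\) adjacent to some vertex of \(X\); for an independent set \(Z\), \(\mathrm{surplus}(Z)=|N(Z)|-|Z|\). Reduction Rule 2 applies to \((G,k)\) when (i) the all-\(\frac12\) assignment is the unique optimum solution of \(LPVC(G)\), and (ii) there is an independent set \(Z\subseteq V(G)\) with \(\mathrm{surplus}(Z)=1\) such that \(N(Z)\) is not an independent set in \(G\); it then outputs \(G'=G[V(G)\setminus(Z\cup N(Z))]\) and \(k'=k-|N(Z)|\). *)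

(* Defs.v *)
From HB Require Import structures.
From mathcomp Require Import all_boot all_order all_algebra.
From mathcomp Require Import reals.
Set Implicit Arguments. Unset Strict Implicit. Unset Printing Implicit Defensive.
Import Order.TTheory GRing.Theory Num.Theory.
Local Open Scope ring_scope.

(* A finite simple graph G is given by a finite vertex set V : {set T} of a
   finType T together with a symmetric irreflexive adjacency relation e : rel T;
   the edges of G are the pairs {u,v} with u, v in V and e u v.
   The induced subgraph G[W] (W \subset V) is (W, e). *)

Section Graph.
Variable T : finType.
Variable e : rel T.

Definition simple_graph : Prop := symmetric e /\ irreflexive e.

Definition independent (V Z : {set T}) : bool :=
  (Z \subset V) && [forall u in Z, forall v in Z, ~~ e u v].

Definition nbh (V X : {set T}) : {set T} :=
  [set v in V :\: X | [exists u in X, e u v]].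

(* a matching: a set of (oriented representatives of) edges of G, pairwise
   vertex-disjoint *)
Definition is_matching (V : {set T}) (M : {set T * T}) : bool :=
  [forall p in M, [&& p.1 \in V, p.2 \in V & e p.1 p.2]] &&
  [forall p in M, forall q in M,
      (p != q) ==> [disjoint [set p.1; p.2] & [set q.1; q.2]]].

Definition MM (V : {set T}) : nat :=
  \max_(M : {set T * T} | is_matching V M) #|M|.

Variable R : realType.

Definition lpvc_feasible (V : {set T}) (x : T -> R) : Prop :=
  (forall v, v \in V -> 0 <= x v <= 1) /\
  (forall u v, u \in V -> v \in V -> e u v -> 1 <= x u + x v).

Definition lp_obj (V : {set T}) (x : T -> R) : R := \sum_(v in V) x v.

Definition lpvc_optimal (V : {set T}) (x : T -> R) : Prop :=
  lpvc_feasible V x /\ forall y, lpvc_feasible V y -> lp_obj V x <= lp_obj V y.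

Definition is_LP_value (V : {set T}) (r : R) : Prop :=
  exists2 x, lpvc_optimal V x & lp_obj V x = r.

(* the all-1/2 assignment is the unique optimum of LPVC(G)
   (solutions compared on the vertices of G) *)
Definition half_unique_opt (V : {set T}) : Prop :=
  lpvc_optimal V (fun _ => 2^-1) /\
  forall y, lpvc_optimal V y -> forall v, v \in V -> y v = 2^-1.

End Graph.

(* Main.v *)
Require Import Defs.
From HB Require Import structures.
From mathcomp Require Import all_boot all_order all_algebra.
From mathcomp Require Import reals.
From mathcomp Require Import lra zify.
Set Implicit Arguments. Unset Strict Implicit. Unset Printing Implicit Defensive.
Import Order.TTheory GRing.Theory Num.Theory.
Local Open Scope ring_scope.

Section Round.
Variable R : realType.
Variable T : finType.
Variable e : rel T.
Variable W : {set T}.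

Definition Bs (x : T -> R) : {set T} :=
  [set v in W | [&& x v != 0, x v != 2^-1 & x v != 1]].
Definition dirn (x : T -> R) v : R :=
  if v \in Bs x then (if x v < 2^-1 then -1 else 1) else 0.
Definition dd (s : bool) (x : T -> R) v : R :=
  if x v < 2^-1 then (if s then x v else 2^-1 - x v)
  else (if s then 1 - x v else x v - 2^-1).
Definition sg (s : bool) : R := if s then 1 else -1.
Definition yy (s : bool) (d : R) (x : T -> R) v := x v + sg s * d * dirn x v.

Lemma vf (x : T -> R) (s : bool) (d : R) w : lpvc_feasible e W x ->
  (forall v, v \in Bs x -> d <= dd s x v) -> w \in W ->
  [/\ dirn x w = -1, 0 < x w, x w < 2^-1 & d <= (if s then x w else 2^-1 - x w)] \/
  [/\ dirn x w = 1, 2^-1 < x w, x w < 1 & d <= (if s then 1 - x w else x w - 2^-1)] \/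
  (dirn x w = 0 /\ (x w = 0 \/ x w = 2^-1 \/ x w = 1)).
Proof.
move=> [xb _] hd wW; have := xb w wW => /andP[x0 x1].
rewrite /dirn; case: (boolP (w \in Bs x)) => wB.
  have := hd w wB; rewrite /dd => hdw; move: wB; rewrite /Bs inE wW /= => /and3P[n0 nh n1].
  case: ltP => h; [rewrite h in hdw | rewrite ltNge h /= in hdw].
    by left; split => //; rewrite lt_neqAle eq_sym n0 x0.
  right; left; split => //; first by rewrite lt_neqAle eq_sym nh h.
  by rewrite lt_neqAle n1 x1.
right; right; split => //.
move: wB; rewrite /Bs inE wW /=; rewrite !negb_and !negbK.
by case/or3P => /eqP ->; auto.
Qed.

Lemma yy_feas (x : T -> R) (s : bool) (d : R) : lpvc_feasible e W x -> 0 < d ->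
  (forall v, v \in Bs x -> d <= dd s x v) -> lpvc_feasible e W (yy s d x).
Proof.
move=> hx d0 hd; have [xb xe] := hx; split.
  move=> w wW; rewrite /yy /sg.
  case: (vf hx hd wW) => [[-> h1 h2 h3]|[[-> h1 h2 h3]|[-> _]]];
    have := xb w wW; move=> /andP[? ?]; clear hd; destruct s; simpl in *; apply/andP; split; lra.
move=> u v uW vW euv; have := xe u v uW vW euv; rewrite /yy /sg.
have := xb u uW; have := xb v vW.
case: (vf hx hd uW) => [[-> h1 h2 h3]|[[-> h1 h2 h3]|[-> h4]]];
case: (vf hx hd vW) => [[-> g1 g2 g3]|[[-> g1 g2 g3]|[-> g4]]];
  move=> /andP[? ?] /andP[? ?]; clear hd; destruct s; simpl in *;
  try (case: h4 => [|[]] ->); try (case: g4 => [|[]] ->); lra.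
Qed.

Lemma yy_obj (x : T -> R) s d :
  lp_obj W (yy s d x) = lp_obj W x + sg s * d * \sum_(v in W) dirn x v.
Proof. by rewrite /lp_obj /yy big_split /= mulr_sumr. Qed.

Lemma helper (E : R) : (E = 0 \/ E = 2^-1 \/ E = 1) -> ~~ [&& E != 0, E != 2^-1 & E != 1].
Proof. by case=> [->|[->|->]]; rewrite eqxx ?andbF. Qed.

Lemma Bs_yy (x : T -> R) s v0 : lpvc_feasible e W x -> v0 \in Bs x ->
  (forall v, v \in Bs x -> dd s x v0 <= dd s x v) ->
  Bs (yy s (dd s x v0) x) \subset Bs x :\ v0.
Proof.
move=> hx v0B hd; apply/subsetP=> v.
have v0W : v0 \in W by move: v0B; rewrite /Bs inE => /andP[].
rewrite [in X in X -> _]/Bs inE => /andP[vW hv]; rewrite in_setD1.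
case: (boolP (v \in Bs x)) => vB; last first.
  move: hv; rewrite /yy /dirn (negbTE vB) mulr0 addr0 => hv.
  by move: vB; rewrite /Bs inE vW hv.
rewrite andbT; apply/eqP => ev; subst v.
move: hv; apply/negP; apply: helper.
rewrite /yy /sg /dirn v0B /dd.
case: ltP => h; case: s {hd} => /=;
  by [left; lra | right; left; lra | right; right; lra].
Qed.


Lemma dd_pos (x : T -> R) s v : lpvc_feasible e W x -> v \in Bs x -> 0 < dd s x v.
Proof.
move=> [xb _]; rewrite /Bs inE => /andP[vW /and3P[n0 nh n1]].
have /andP[x0 x1] := xb v vW.
have x0' : 0 < x v by rewrite lt_neqAle eq_sym n0 x0.
have x1' : x v < 1 by rewrite lt_neqAle n1 x1.
rewrite /dd; case: s; case: (ltP (x v) 2^-1) => h; try lra;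
have : 2^-1 < x v by rewrite lt_neqAle eq_sym nh h.
all: lra.
Qed.

Lemma round_base (x : T -> R) : lpvc_feasible e W x -> Bs x = set0 ->
  exists y, [/\ lpvc_feasible e W y, (forall v, v \in W -> [|| y v == 0, y v == 2^-1 | y v == 1]) & lp_obj W y <= lp_obj W x].
Proof.
move=> hx B0; exists x; split => // v vW.
have : v \notin Bs x by rewrite B0 inE.
by rewrite /Bs inE vW /= !negb_and !negbK.
Qed.

Lemma round n : forall x : T -> R, (#|Bs x| <= n)%N -> lpvc_feasible e W x ->
  exists y, [/\ lpvc_feasible e W y, (forall v, v \in W -> [|| y v == 0, y v == 2^-1 | y v == 1]) & lp_obj W y <= lp_obj W x].
Proof.
elim: n => [|n IH] x hB hx.
  by apply: round_base => //; apply: cards0_eq; move: hB; rewrite leqn0 => /eqP.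
case: (set_0Vmem (Bs x)) => [B0|[w0 w0B]]; first exact: round_base.
set s := (\sum_(v in W) dirn x v <= 0).
case: (arg_minP (dd s x) w0B) => v0 v0B hmin.
have d0 := dd_pos s hx v0B.
have hy := yy_feas hx d0 hmin.
have sB := Bs_yy hx v0B hmin.
have hl : (#|Bs (yy s (dd s x v0) x)| <= n)%N.
  apply: (leq_trans (subset_leq_card sB)).
  have v0B2 : v0 \in Bs x := v0B. have := cardsD1 v0 (Bs x); rewrite v0B2 /=; lia.
have [z [hz1 hz2 hz3]] := IH (yy s (dd s x v0) x) hl hy.
exists z; split => //; apply: le_trans hz3 _.
move: d0; rewrite yy_obj /sg; move: (dd s x v0) => d d0; rewrite /s; case: (leP (\sum_(v in W) dirn x v) 0) => h; nra.
Qed.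

End Round.
Local Close Scope ring_scope.
Section Hall.
Variable T : finType.
Variable e : rel T.

Definition nb (A S : {set T}) : {set T} := [set n in A | [exists z in S, e z n]].

Lemma nb_sub (A B S : {set T}) : A \subset B -> nb A S \subset nb B S.
Proof.
move=> sAB; apply/subsetP=> x; rewrite !inE => /andP[xA ->].
by rewrite (subsetP sAB).
Qed.

Lemma hall n : forall (Z A : {set T}), #|Z| <= n ->
  (forall S : {set T}, S \subset Z -> #|S| <= #|nb A S|) ->
  exists f : T -> T, (forall z, z \in Z -> f z \in A /\ e z (f z)) /\
                     {in Z &, injective f}.
Proof.
elim: n => [|n IH] Z A hZ hH.
  have -> : Z = set0 by apply: cards0_eq; lia.
  by exists id; split=> [z|]; rewrite ?inE.
case: (boolP [exists S : {set T}, [&& S \subset Z, S != set0, S != Z & #|nb A S| <= #|S|]]).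
- move/existsP=> [S /and4P[sSZ nS0 nSZ tS]].
  have ltSZ : #|S| < #|Z| by apply: proper_card; rewrite properEneq nSZ.
  have [f1 [f1P f1I]] : exists f : T -> T, (forall z, z \in S -> f z \in nb A S /\ e z (f z)) /\
                     {in S &, injective f}.
    apply: IH; first lia.
    move=> S' sS'S; apply: (leq_trans (hH S' (subset_trans sS'S sSZ))).
    apply: subset_leq_card; apply/subsetP=> x; rewrite !inE => /andP[xA /existsP[z /andP[zS' ezx]]].
    rewrite xA /=; apply/andP; split; apply/existsP; exists z; rewrite ezx andbT //.
    exact: (subsetP sS'S).
  have S0 : 0 < #|S| by rewrite card_gt0.
  have [f2 [f2P f2I]] : exists f : T -> T, (forall z, z \in Z :\: S -> f z \in A :\: nb A S /\ e z (f z)) /\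
                     {in Z :\: S &, injective f}.
    apply: IH.
      rewrite cardsD (setIidPr sSZ); lia.
    move=> S' sS'.
    have dis : [disjoint S & S'].
      rewrite -setI_eq0; apply/eqP/setP=> x; rewrite !inE.
      apply/negP=> /andP[xS xS']; move: (subsetP sS' x xS'); by rewrite !inE xS.
    have sS'Z : S' \subset Z by apply: subset_trans sS' (subsetDl Z S).
    have h1 := hH (S :|: S'); rewrite subUset sSZ sS'Z in h1.
    have {}h1 := h1 isT.
    have cU : #|S :|: S'| = #|S| + #|S'|.
      by rewrite -cardsUI (_ : S :&: S' = set0) ?cards0 ?addn0 //; apply/eqP; rewrite setI_eq0.
    have sub : nb A (S :|: S') \subset nb A S :|: nb (A :\: nb A S) S'.
      apply/subsetP=> x; rewrite !inE => /andP[xA /existsP[z /andP[]]].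
      rewrite inE => /orP[zS|zS'] ezx.
        by apply/orP; left; rewrite xA; apply/existsP; exists z; rewrite zS.
      case: (boolP [exists z0 in S, e z0 x]) => [nx|nx]; rewrite xA //=.
      by apply/existsP; exists z; rewrite zS'.
    have := subset_leq_card sub; rewrite cardsU => h2.
    lia.
  exists (fun z => if z \in S then f1 z else f2 z); split.
    move=> z zZ; case: ifP => zS.
      by have [/[!inE] /andP[-> _] ->] := f1P z zS.
    have [] := f2P z; first by rewrite inE zS zZ.
    by rewrite inE => /andP[_ ->] ->.
  move=> x y xZ yZ /=.
  case: ifP => xS; case: ifP => yS.
  - exact: f1I.
  - move=> eq; have [hx _] := f1P x xS; have [] := f2P y; first by rewrite inE yS.
    by rewrite -eq inE hx.
  - move=> eq; have [hy _] := f1P y yS; have [] := f2P x; first by rewrite inE xS.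
    by rewrite eq inE hy.
  - by apply: f2I; rewrite inE ?xS ?yS.
- move=> nt.
  case: (set_0Vmem Z) => [->|[z0 z0Z]].
    by exists id; split=> [z|]; rewrite ?inE.
  have : 0 < #|nb A [set z0]| by apply: leq_trans (hH _ _); rewrite ?cards1 ?sub1set.
  rewrite card_gt0 => /set0Pn [n0]; rewrite inE => /andP[n0A /existsP[z1 /andP[]]].
  rewrite inE => /eqP -> ez0n0.
  have [f' [f'P f'I]] : exists f : T -> T, (forall z, z \in Z :\ z0 -> f z \in A :\ n0 /\ e z (f z)) /\
                     {in Z :\ z0 &, injective f}.
    apply: IH; first by move: hZ; rewrite (cardsD1 z0 Z) z0Z; lia.
    move=> S' sS'.
    case: (set_0Vmem S') => [->|[s0 s0S]]; first by rewrite cards0.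
    have sS'Z : S' \subset Z by apply: subset_trans sS' (subsetDl _ _).
    have nS'Z : S' != Z.
      apply/eqP=> eqS; move: (subsetP sS' z0); rewrite eqS z0Z !inE eqxx => /(_ isT) //.
    have : ~~ (#|nb A S'| <= #|S'|).
      apply/negP=> h; move/existsP: nt; apply; exists S'; rewrite sS'Z nS'Z h andbT /=.
      by rewrite andbT; apply/set0Pn; exists s0.
    rewrite -ltnNge => lt.
    have sub : nb A S' \subset n0 |: nb (A :\ n0) S'.
      apply/subsetP=> x; rewrite !inE => /andP[xA ex].
      by case: eqP => //= _; rewrite xA ex.
    have := subset_leq_card sub; rewrite cardsU1 => h2.
    move: (n0 \notin _) h2 => b h2; case: b h2 => /= h2; lia.
  exists (fun z => if z == z0 then n0 else f' z); split.
    move=> z zZ; case: eqP => [->//|/eqP nz].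
    by have [] := f'P z; rewrite !inE ?nz ?zZ // => /andP[_ ->] ->.
  move=> x y xZ yZ /=.
  case: eqP => [->|/eqP nx]; case: eqP => [->//|/eqP ny].
  - move=> eq; have [] := f'P y; first by rewrite !inE ny yZ.
    by rewrite -eq !inE eqxx.
  - move=> eq; have [] := f'P x; first by rewrite !inE nx xZ.
    by rewrite eq !inE eqxx.
  - by apply: f'I; rewrite !inE ?nx ?ny ?xZ ?yZ.
Qed.
End Hall.
Local Open Scope ring_scope.

Section Aux.
Variable R : realType.
Variable T : finType.

Lemma sum_sub (V A : {set T}) (f : T -> R) : A \subset V ->
  \sum_(v in V) (if v \in A then f v else 0) = \sum_(v in A) f v.
Proof.
move=> sAV; rewrite big_mkcond [RHS]big_mkcond; apply: eq_bigr => v _.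
case: (boolP (v \in A)) => vA; first by rewrite (subsetP sAV v vA).
by case: (v \in V).
Qed.

Lemma sum_ind (V A : {set T}) : A \subset V ->
  \sum_(v in V) ((v \in A)%:R : R) = #|A|%:R.
Proof.
move=> sAV; rewrite -[RHS]mulr1n -[RHS](sumr_const (mem A) (1 : R)) -(sum_sub (fun=> 1) sAV).
by apply: eq_bigr => v _; case: (v \in A).
Qed.

Lemma half_sum (W : {set T}) (z : T -> R) :
  (forall v, v \in W -> [|| z v == 0, z v == 2^-1 | z v == 1]) ->
  exists m : nat, 2 * lp_obj W z = m%:R.
Proof.
move=> h; exists (\sum_(v in W) (if z v == 0%R then 0%N else if z v == (2^-1)%R then 1%N else 2%N))%N.
rewrite natr_sum /lp_obj mulr_sumr; apply: eq_bigr => v vW.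
have := h v vW.
case: eqP => [h1 _|h1]; first by rewrite h1 mulr0.
case: eqP => [h2 _|h2 /= /eqP h3]; first by rewrite h2 /=; lra.
rewrite h3 /=; lra.
Qed.

Lemma disj2 (a b c d : T) : a != c -> a != d -> b != c -> b != d ->
  [disjoint [set a; b] & [set c; d]].
Proof.
move=> h1 h2 h3 h4; rewrite -setI_eq0; apply/eqP/setP => x; rewrite !inE.
apply/negP => /andP[/orP[]/eqP-> /orP[]/eqP Ex].
- by move: h1; rewrite Ex eqxx.
- by move: h2; rewrite Ex eqxx.
- by move: h3; rewrite Ex eqxx.
- by move: h4; rewrite Ex eqxx.
Qed.
End Aux.

Theorem lemma8 (R : realType) (T : finType) (e : rel T) (V Z : {set T}) (k : nat)
  (LPG LPG' : R) :
  simple_graph e ->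
  half_unique_opt e R V ->
  independent e V Z ->
  (#|nbh e V Z| = #|Z| + 1)%N ->
  ~~ independent e V (nbh e V Z) ->
  is_LP_value e V LPG ->
  is_LP_value e (V :\: (Z :|: nbh e V Z)) LPG' ->
  ((k%:Z - (#|nbh e V Z|)%:Z)%:~R + (MM e (V :\: (Z :|: nbh e V Z)))%:R - 2 * LPG'
     <= (k%:R + (MM e V)%:R - 2 * LPG :> R)).
Proof.
move=> [esym eirr] [hopt huniq] indZ hcard _ [x hxopt hxval] [x' hx'opt hx'val].
set N := nbh e V Z in hcard hx'opt hx'val *.
set V' := V :\: (Z :|: N) in hx'opt hx'val *.
have ZV : Z \subset V by case/andP: indZ.
have Zind : forall u v, u \in Z -> v \in Z -> ~~ e u v.
  move: indZ => /andP[_ /forall_inP h] u v uZ vZ.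
  exact: (forall_inP (h u uZ) v vZ).
have NV : N \subset V by apply/subsetP => v; rewrite /N /nbh !inE => /andP[/andP[]].
have NZ : forall v, v \in N -> v \notin Z by move=> v; rewrite /N /nbh !inE => /andP[/andP[]].
have adjN : forall u v, u \in Z -> v \in V -> e u v -> v \in N.
  move=> u v uZ vV euv; rewrite /N /nbh !inE vV andbT.
  have -> : v \notin Z by apply/negP => vZ; move: (Zind u v uZ vZ); rewrite euv.
  by apply/existsP; exists u; rewrite uZ.
have V'V : V' \subset V by apply: subsetDl.
have V'P : forall v, v \in V' -> [/\ v \in V, v \notin Z & v \notin N].
  by move=> v; rewrite !inE negb_or => /andP[/andP[-> ->] ->].
have part : forall v, v \in V -> [\/ v \in Z, v \in N | v \in V'].
  move=> v vV; case: (boolP (v \in Z)) => vZ; first by constructor 1.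
  case: (boolP (v \in N)) => vN; first by constructor 2.
  by constructor 3; rewrite in_setD in_setU negb_or vZ vN vV.
have [z0 z0Z] : exists z0, z0 \in Z.
  case: (set_0Vmem Z) => [Z0|[z1 z1Z]]; last by exists z1.
  move: hcard.
  have -> : N = set0.
    apply/setP => v; rewrite /N /nbh !inE Z0; apply/negP => /andP[_ /existsP[u]].
    by rewrite inE.
  by rewrite Z0 !cards0.
have cardV : #|V| = (#|V'| + #|Z| + #|N|)%N.
  rewrite /V' cardsD (setIidPr _); last by rewrite subUset ZV NV.
  rewrite cardsU (_ : Z :&: N = set0).
    rewrite cards0 subn0; have : (#|Z :|: N| <= #|V|)%N by apply: subset_leq_card; rewrite subUset ZV NV.
    rewrite cardsU (_ : Z :&: N = set0) ?cards0 ?subn0; first lia.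
    by apply/setP => v; rewrite in_setI in_set0; apply/negP => /andP[vZ /NZ]; rewrite vZ.
  by apply/setP => v; rewrite in_setI in_set0; apply/negP => /andP[vZ /NZ]; rewrite vZ.
have objhalf : forall W : {set T}, lp_obj W (fun _ => 2^-1 : R) = #|W|%:R / 2.
  by move=> W; rewrite /lp_obj sumr_const -(mulr_natr (2^-1 : R) #|W|) mulrC.
have LPGv : LPG = #|V|%:R / 2.
  rewrite -hxval -objhalf; apply/eqP; rewrite eq_le (hxopt.2 _ hopt.1) /=.
  exact: hopt.2 _ hxopt.1.
have hH : forall S : {set T}, S \subset Z -> (#|S| <= #|nb e N S|)%N.
  move=> S sSZ.
  set NS := nbh e V S.
  have sub : NS \subset nb e N S.
    apply/subsetP => v; rewrite [in X in X -> _]/NS /nbh !inE => /andP[/andP[vS vV] /existsP[u /andP[uS euv]]].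
    have := adjN u v (subsetP sSZ u uS) vV euv; rewrite /N /nbh !inE => -> /=.
    by apply/existsP; exists u; rewrite uS.
  apply: (leq_trans _ (subset_leq_card sub)).
  have SV : S \subset V by apply: subset_trans sSZ ZV.
  have NSV : NS \subset V by apply/subsetP => v; rewrite /NS /nbh !inE => /andP[/andP[]].
  have key : forall a b, a \in V -> b \in V -> e a b -> (a \in S) ==> (b \in NS) && (b \notin S).
    move=> a b aV bV eab; apply/implyP => aS.
    have bS : b \notin S.
      by apply/negP => bS; move: (Zind a b (subsetP sSZ a aS) (subsetP sSZ b bS)); rewrite eab.
    rewrite bS andbT /NS /nbh !inE bS bV /=.
    by apply/existsP; exists a; rewrite aS.
  have dSN : forall a, ~~ ((a \in S) && (a \in NS)).
    by move=> a; rewrite /NS /nbh !inE; case: (a \in S).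
  pose y := fun v => 2^-1 - (v \in S)%:R / 2 + (v \in NS)%:R / 2 : R.
  have yf : lpvc_feasible e V y.
    split.
      move=> v _; rewrite /y; move: (dSN v); case: (v \in S); case: (v \in NS) => //= _; apply/andP; split; lra.
    move=> u v uV vV euv; rewrite /y.
    move: (key u v uV vV euv) (key v u vV uV (etrans (esym v u) euv)) (dSN u) (dSN v).
    by case: (u \in S); case: (u \in NS); case: (v \in S); case: (v \in NS) => //= *; lra.
  have yobj : lp_obj V y = #|V|%:R / 2 - #|S|%:R / 2 + #|NS|%:R / 2.
    rewrite /lp_obj /y !big_split /= sumrN -!mulr_suml !sum_ind //.
    by rewrite sumr_const -(mulr_natr (2^-1 : R) #|V|) mulrC.
  have := hopt.2 y yf; rewrite objhalf yobj -(ler_nat R) => h.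
  lra.
have [f [fP fI]] := @hall T e #|Z| Z N (leqnn _) hH.
have [M0 M0m hM0] := @eq_bigmax_cond _ [pred M | is_matching e V' M] (fun M => #|M|) (ltac:(
  apply/card_gt0P; exists set0; rewrite inE /is_matching;
  by apply/andP; split; apply/forall_inP => p; rewrite inE)).
have MM' : MM e V' = #|M0| := hM0.
move: M0m; rewrite inE => /andP[/forall_inP M0V /forall_inP M0d].
set M := M0 :|: [set (z, f z) | z in Z].
have Mm : is_matching e V M.
  apply/andP; split.
    apply/forall_inP => p; rewrite in_setU => /orP[pM0|/imsetP[z zZ ->]].
      have /and3P[a b c] := M0V p pM0.
      by rewrite c (subsetP V'V _ a) (subsetP V'V _ b).
    have [fzN ezf] := fP z zZ.
    by rewrite /= ezf (subsetP ZV z zZ) (subsetP NV _ fzN).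
  apply/forall_inP => p pM; apply/forall_inP => q qM; apply/implyP => npq.
  have cross : forall p z, p \in M0 -> z \in Z -> [disjoint [set p.1; p.2] & [set z; f z]].
    move=> p' z p'M zZ; have /and3P[a b _] := M0V p' p'M.
    have [_ a1 a2] := V'P _ a; have [_ b1 b2] := V'P _ b.
    have [fzN _] := fP z zZ.
    apply: disj2; apply/eqP => E.
    - by move: a1; rewrite E zZ.
    - by move: a2; rewrite E fzN.
    - by move: b1; rewrite E zZ.
    - by move: b2; rewrite E fzN.
  move: pM qM npq; rewrite !in_setU => /orP[pM0|/imsetP[z zZ ->]] /orP[qM0|/imsetP[z' z'Z ->]] npq.
  - exact: (implyP (forall_inP (M0d p pM0) q qM0)).
  - exact: cross.
  - by rewrite disjoint_sym; apply: cross.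
  have nz : z != z' by apply: contraNneq npq => ->.
  have [fzN _] := fP z zZ; have [fz'N _] := fP z' z'Z.
  apply: disj2 => //=.
  - by apply/eqP => E; move: (NZ _ fz'N); rewrite -E zZ.
  - by apply/eqP => E; move: (NZ _ fzN); rewrite E z'Z.
  - by apply: contra_neq nz => /fI; apply.
have cardM : #|M| = (#|M0| + #|Z|)%N.
  rewrite cardsU (_ : M0 :&: _ = set0).
    rewrite cards0 subn0 card_imset //.
    by move=> a b [->].
  apply/setP => p; rewrite in_setI in_set0; apply/negP => /andP[pM0 /imsetP[z zZ E]].
  have /and3P[a _ _] := M0V p pM0; have [_ a1 _] := V'P _ a.
  by move: a1; rewrite E /= zZ.
have MMge : (#|M0| + #|Z| <= MM e V)%N.
  rewrite -cardM; exact: (@leq_bigmax_cond _ (fun M => is_matching e V M) (fun M => #|M|) M Mm).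
have [zz [zf zh zo]] := @round R T e V' _ x' (leqnn _) hx'opt.1.
have [m hm] := half_sum zh.
have [zb ze] := zf.
pose ext := fun v => (v \in N)%:R + (if v \in V' then zz v else 0) : R.
have eN : forall w, w \in N -> ext w = 1.
  move=> w wN; rewrite /ext wN.
  have -> : (w \in V') = false by apply/negP => /V'P [_ _]; rewrite wN.
  by rewrite addr0.
have eV' : forall w, w \in V' -> ext w = zz w.
  by move=> w wV; rewrite /ext wV; have [_ _ /negbTE ->] := V'P w wV; rewrite add0r.
have eZ : forall w, w \in Z -> ext w = 0.
  move=> w wZ; rewrite /ext.
  have -> : (w \in N) = false by apply/negP => /NZ; rewrite wZ.
  have -> : (w \in V') = false by apply/negP => /V'P [_]; rewrite wZ.
  by rewrite addr0.
have eb : forall w, w \in V -> 0 <= ext w <= 1.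
  move=> w wV; case: (part w wV) => h.
  - by rewrite eZ // lexx ler01.
  - by rewrite eN // ler01 lexx.
  - by rewrite eV' //; apply: zb.
have extf : lpvc_feasible e V ext.
  split => // u v uV vV euv.
  have evu : e v u by rewrite esym.
  have /andP[u0 u1] := eb u uV; have /andP[v0 v1] := eb v vV.
  case: (part u uV) => hu; case: (part v vV) => hv.
  - by move: (Zind u v hu hv); rewrite euv.
  - by rewrite (eZ u) // (eN v) // add0r.
  - by move: (adjN u v hu vV euv); have [_ _ ] := V'P v hv => /negbTE ->.
  - by rewrite (eN u) // (eZ v) // addr0.
  - by rewrite (eN u) // lerDl.
  - by rewrite (eN u) // lerDl.
  - by move: (adjN v u hv uV evu); have [_ _ ] := V'P u hu => /negbTE ->.
  - by rewrite (eN v) // lerDr.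
  - by rewrite (eV' u) // (eV' v) //; apply: ze.
have extobj : lp_obj V ext = #|N|%:R + lp_obj V' zz.
  by rewrite /lp_obj big_split /= sum_ind // sum_sub.
have lt : lp_obj V (fun _ => 2^-1) < lp_obj V ext.
  rewrite lt_neqAle (hopt.2 _ extf) andbT; apply/eqP => E.
  have extopt : lpvc_optimal e V ext.
    by split => // y yf; rewrite -E; apply: hopt.2.
  have := huniq ext extopt z0 (subsetP ZV z0 z0Z); rewrite eZ //; lra.
rewrite objhalf extobj in lt.
have mge : (#|V'| <= m)%N.
  have : (#|V| < 2 * #|N| + m)%N.
    rewrite -(ltr_nat R) natrD natrM; lra.
  lia.
have L'ge : #|V'|%:R <= 2 * LPG'.
  apply: (le_trans (y := m%:R)); first by rewrite ler_nat.
  by rewrite -hm -hx'val; lra.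
have E1 : ((k%:Z - #|N|%:Z)%:~R : R) = k%:R - #|N|%:R by rewrite intrB.
rewrite E1 LPGv MM'.
move: MMge; rewrite -(ler_nat R) natrD => MMge.
have cV : (#|V|%:R : R) = #|V'|%:R + #|Z|%:R + #|N|%:R by rewrite cardV !natrD.
have cN : (#|N|%:R : R) = #|Z|%:R + 1 by rewrite hcard natrD.
lra.
Qed.
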